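(* Let $N\ge 1$, let $f:Z[1,N]\times\mathbb{R}\to\mathbb{R}$ be continuous in its second variable for every $k\in Z[1,N]$, and let $p:Z[1,N+2]\to\mathbb{R}$, $q:Z[1,N+1]\to\mathbb{R}$. Assume that (1) there exists $m>0$ such that $s f(k,s)\ge 0$ for all $|s|\ge m$ and $k\in Z[1,N]$; (2) $\eta'(p)\,p_{\min}-\eta(q)\,q_{\max}>0$; that $s\mapsto f(k,s)$ is non-decreasing for every $k\in Z[1,N]$, and that $p_{\min}\eta'(p)>q_{\max}\eta(q)$. Then the boundary value problem $$\Delta^2\big(p(k)\Delta^2 y(k-2)\big)+\Delta\big(q(k)\Delta y(k-1)\big)+f(k,y(k))=0\ \ (k\in Z[1,N]),\qquad y(-1)=y(0)=y(N+1)=y(N+2)=0$$ has exactly one solution.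
   Context: $Z[a,b]=[a,b]\cap\mathbb{Z}$; $\Delta x(k)=x(k+1)-x(k)$, $\Delta^2=\Delta\circ\Delta$; $\Delta^2(p(k)\Delta^2y(k-2))$ means $\Delta^2$ applied to $k\mapsto p(k)\Delta^2 y(k-2)$, similarly for $\Delta(q(k)\Delta y(k-1))$. A solution is a function $y:Z[-1,N+2]\to\mathbb{R}$ satisfying the equation and boundary conditions. $p_{\min}=\min_{Z[1,N+2]}p$, $q_{\max}=\max_{Z[1,N+1]}q$. Let $E=\{y:Z[-1,N+2]\to\mathbb{R}\mid y(-1)=y(0)=y(N+1)=y(N+2)=0\}$ and $\tilde y=(y(1),\dots,y(N))^T$; let $V$ be the $(N+1)\times N$ matrix with $V\tilde y=(\Delta y(0),\dots,\Delta y(N))^T$ and $W$ the $(N+2)\times N$ matrix with $W\tilde y=(\Delta^2y(-1),\dots,\Delta^2y(N))^T$ for $y\in E$; $\lambda_1$, $\lambda_2$ are the smallest eigenvalues of $V^TV$ and $W^TW$. Define $\eta'(p)=\lambda_2$ if $p_{\min}\ge 0$ and $\eta'(p)=16$ if $p_{\min}<0$; $\eta(q)=\lambda_1$ if $q_{\max}<0$ and $\eta(q)=4$ if $q_{\max}\ge 0$. *)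

(* Defs.v *)
From HB Require Import structures.
From mathcomp Require Import all_boot all_order all_algebra.
From mathcomp Require Import all_classical all_reals topology normedtype.
Set Implicit Arguments. Unset Strict Implicit. Unset Printing Implicit Defensive.
Import Order.TTheory GRing.Theory Num.Theory.
Import numFieldNormedType.Exports.
Local Open Scope ring_scope.

Section Defs.
Variable R : realType.

Definition fdiff (x : int -> R) : int -> R := fun k => x (k + 1) - x k.

Definition pmin (N : nat) (p : int -> R) : R :=
  \big[Num.min/p 1]_(i < N.+2) p (i.+1)%:Z.
Definition qmax (N : nat) (q : int -> R) : R :=
  \big[Num.max/q 1]_(i < N.+1) q (i.+1)%:Z.

(* V : (N+1) x N with V ytilde = (Delta y(0), ..., Delta y(N)) for y in E,
   where ytilde_i = y(i+1) (i < N). *)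
Definition Vmx (N : nat) : 'M[R]_(N.+1, N) :=
  \matrix_(j < N.+1, i < N) ((j == i :> nat)%:R - (j == i.+1 :> nat)%:R).

(* W : (N+2) x N with W ytilde = (Delta^2 y(-1), ..., Delta^2 y(N)) for y in E. *)
Definition Wmx (N : nat) : 'M[R]_(N.+2, N) :=
  \matrix_(j < N.+2, i < N)
    ((j == i :> nat)%:R - 2 * (j == i.+1 :> nat)%:R + (j == i.+2 :> nat)%:R).

Definition smallest_eigenvalue (n : nat) (A : 'M[R]_n) (l : R) : Prop :=
  eigenvalue A l /\ forall a, eigenvalue A a -> l <= a.

Definition etap (N : nat) (lam2 : R) (p : int -> R) : R :=
  if 0 <= pmin N p then lam2 else 16.
Definition etaq (N : nat) (lam1 : R) (q : int -> R) : R :=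
  if qmax N q < 0 then lam1 else 4.

(* y : Z -> R is a solution of the BVP (only its values on Z[-1,N+2] matter) *)
Definition is_solution (N : nat) (p q : int -> R) (f : int -> R -> R)
    (y : int -> R) : Prop :=
  (forall k : int, 1 <= k <= N%:Z ->
     fdiff (fdiff (fun j => p j * fdiff (fdiff y) (j - 2))) k
     + fdiff (fun j => q j * fdiff y (j - 1)) k + f k (y k) = 0)
  /\ y (-1) = 0 /\ y 0 = 0 /\ y (N.+1)%:Z = 0 /\ y (N.+2)%:Z = 0.

End Defs.

(* Main.v *)
Require Import Defs.
From HB Require Import structures.
From mathcomp Require Import all_boot all_order all_algebra.
From mathcomp Require Import all_classical all_reals all_analysis.
From mathcomp Require Import ring lra.
Import Order.TTheory GRing.Theory Num.Theory.
Import numFieldNormedType.Exports.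
Local Open Scope classical_set_scope.
Local Open Scope ring_scope.
From mathcomp Require Import zify.
Section Ray.
Context {R : realType}.

Definition nrm {n} (u : 'rV[R]_n) := \sum_i u ord0 i ^+ 2.
Definition qf {n} (A : 'M[R]_n) (u : 'rV[R]_n) := \sum_i \sum_j u ord0 i * A i j * u ord0 j.

Lemma nrm_ge0 n (u : 'rV[R]_n) : 0 <= nrm u.
Proof. by apply: sumr_ge0 => i _; rewrite sqr_ge0. Qed.

Lemma nrm_eq0 n (u : 'rV[R]_n) : nrm u = 0 -> u = 0.
Proof.
move=> h; apply/rowP => i; rewrite mxE.
have := @psumr_eq0P _ _ predT (fun i => u ord0 i ^+ 2) (fun i _ => sqr_ge0 _) h i isT.
by move/eqP; rewrite sqrf_eq0 => /eqP; rewrite ord1.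
Qed.

Lemma nrm_cont n : continuous (@nrm n).
Proof.
apply: (@continuous_big _ _ +%R 0 predT add_continuous) => i _.
move=> x; apply: continuousM; exact: coord_continuous.
Qed.

Lemma qf_cont n (A : 'M[R]_n) : continuous (qf A).
Proof.
apply: (@continuous_big _ _ +%R 0 predT add_continuous) => i _.
apply: (@continuous_big _ _ +%R 0 predT add_continuous) => j _.
move=> x; exact: (continuousM (continuousM (@coord_continuous R 1 n ord0 i x)
  (@cst_continuous _ _ (A i j) x)) (@coord_continuous R 1 n ord0 j x)).
Qed.

Lemma nrmZ n (t : R) (u : 'rV[R]_n) : nrm (t *: u) = t ^+ 2 * nrm u.
Proof.
rewrite /nrm mulr_sumr; apply: eq_bigr => i _; rewrite mxE; by rewrite exprMn.
Qed.

Lemma qfZ n (A : 'M[R]_n) (t : R) (u : 'rV[R]_n) : qf A (t *: u) = t ^+ 2 * qf A u.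
Proof.
rewrite /qf mulr_sumr; apply: eq_bigr => i _; rewrite mulr_sumr.
apply: eq_bigr => j _; rewrite !mxE; ring.
Qed.

Definition bil {n} (A : 'M[R]_n) (u w : 'rV[R]_n) := \sum_i \sum_j w ord0 i * A i j * u ord0 j.
Definition dot {n} (u w : 'rV[R]_n) := \sum_i w ord0 i * u ord0 i.

Lemma qfD n (A : 'M[R]_n) (t : R) (u w : 'rV[R]_n) : (forall i j, A i j = A j i) ->
  qf A (u + t *: w) = qf A u + 2 * t * bil A u w + t ^+ 2 * qf A w.
Proof.
move=> As.
have e : bil A u w = \sum_i \sum_j u ord0 i * A i j * w ord0 j.
  rewrite /bil exchange_big /=; apply: eq_bigr => i _; apply: eq_bigr => j _.
  first [rewrite (As j i); ring | rewrite (As i j); ring].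
have -> : 2 * t * bil A u w = t * (\sum_i \sum_j u ord0 i * A i j * w ord0 j) + t * bil A u w.
  by rewrite -e; ring.
rewrite /qf /bil !mulr_sumr -!big_split /=.
apply: eq_bigr => i _; rewrite !mulr_sumr -!big_split /=.
apply: eq_bigr => j _; rewrite !mxE; ring.
Qed.

Lemma nrmD n (t : R) (u w : 'rV[R]_n) :
  nrm (u + t *: w) = nrm u + 2 * t * dot u w + t ^+ 2 * nrm w.
Proof.
rewrite /nrm /dot mulr_sumr mulr_sumr -!big_split /=.
apply: eq_bigr => i _; rewrite !mxE; ring.
Qed.

Lemma quad0 (a b : R) : 0 <= b -> (forall t, 0 <= 2 * t * a + t ^+ 2 * b) -> a = 0.
Proof.
move=> b0 H.
have b1 : 0 < b + 1 by lra.
have := H (- a / (b + 1)).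
have -> : 2 * (- a / (b + 1)) * a + (- a / (b + 1)) ^+ 2 * b
          = - (a ^+ 2 * (b + 2)) / (b + 1) ^+ 2.
  by field; rewrite gt_eqF.
rewrite pmulr_lge0 ?invr_gt0 ?exprn_gt0 //.
rewrite oppr_ge0 => h.
have : a ^+ 2 * (b + 2) = 0.
  apply/eqP; rewrite eq_le h /=; apply: mulr_ge0; [exact: sqr_ge0 | lra].
move/eqP; rewrite mulf_eq0 sqrf_eq0 => /orP [/eqP //|]; lra.
Qed.


Lemma rayleigh n (A : 'M[R]_n) (lam : R) :
  (forall i j, A i j = A j i) ->
  eigenvalue A lam /\ (forall a, eigenvalue A a -> lam <= a) ->
  forall u : 'rV[R]_n, lam * nrm u <= qf A u.
Proof.
case: n A => [|n] A As [_ lmin] u.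
  by rewrite /qf /nrm !big_ord0 mulr0.
pose g (v : 'rV[R]_n.+1) := qf A v - lam * nrm v.
pose S := [set v : 'rV[R]_n.+1 | nrm v = 1].
have gc : continuous g.
  move=> x; apply: continuousB; first exact: qf_cont.
  apply: continuousM; first exact: cst_continuous.
  exact: nrm_cont.
have S0 : S !=set0.
  exists (delta_mx 0 0); rewrite /S /= /nrm (bigD1 ord0) //= big1 ?mxE /=.
    by rewrite expr1n addr0.
  by move=> i /negbTE ni; rewrite mxE ni /= ?andbF expr0n.
have Sc : compact S.
  apply: bounded_closed_compact.
    rewrite /bounded_near; exists 1; split => // M M1 v /= Sv.
    rewrite [X in X <= _]/Num.norm /= mx_normrE; apply: bigmax_le => [|[i j] _]; first by lra.
    rewrite /= (ord1 i).
    have : v ord0 j ^+ 2 <= 1.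
      rewrite -Sv /nrm (bigD1 j) //= lerDl; apply: sumr_ge0 => k _; exact: sqr_ge0.
    move=> h; rewrite ler_norml; apply/andP; split; nra.
  have h := (@preimage_closed _ _ nrm [set x | x = 1] (fun x _ => @nrm_cont n.+1 x) (@closed_eq _ 1)).
  exact: h.
have [u0 u0S u0min] := EVT_min_rV S0 Sc (continuous_subspaceT gc).
have nu0 : nrm u0 = 1 by move: u0S; rewrite inE.
set mu := g u0.
have hom : forall w, mu * nrm w <= g w.
  move=> w; have [w0|wn0] := eqVneq (nrm w) 0.
    have -> : w = 0 by exact: nrm_eq0.
    rewrite /g /qf /nrm; rewrite !big1 ?mulr0 ?subrr // => i _.
      by rewrite big1 // => j _; rewrite !mxE mulr0.
    by rewrite mxE expr0n.
  have wp : 0 < nrm w by rewrite lt_def wn0 nrm_ge0.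
  set s := Num.sqrt (nrm w).
  have sp : 0 < s by rewrite sqrtr_gt0.
  have s2 : s ^+ 2 = nrm w by rewrite sqr_sqrtr // ltW.
  have := u0min (s^-1 *: w).
  rewrite inE /S /= nrmZ exprVn s2 mulVf ?gt_eqF // => /(_ erefl).
  rewrite /g qfZ nrmZ exprVn s2 -/mu => h.
  have e1 : (nrm w)^-1 * g w = (nrm w)^-1 * qf A w - lam * ((nrm w)^-1 * nrm w) by rewrite /g; ring.
  have : mu <= (nrm w)^-1 * (g w) by rewrite e1.
  by rewrite ler_pdivlMl // mulrC.
have mu0 : 0 <= mu.
  rewrite leNgt; apply/negP => mun.
  pose r := \row_(i < n.+1) (\sum_j A i j * u0 ord0 j - (lam + mu) * u0 ord0 i).
  have key : forall w : 'rV[R]_n.+1, \sum_i w ord0 i * r ord0 i = 0.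
    move=> w; have := quad0 (\sum_i w ord0 i * r ord0 i) (g w - mu * nrm w). apply; first by rewrite subr_ge0.
    move=> t.
    have := hom (u0 + t *: w).
    rewrite /g qfD // nrmD nu0 -/(g u0) => h.
    have e : \sum_i w ord0 i * r ord0 i = bil A u0 w - (lam + mu) * dot u0 w.
      rewrite /bil /dot mulr_sumr -sumrB; apply: eq_bigr => i _.
      by rewrite mxE mulrBr mulr_sumr; congr (_ - _); [apply: eq_bigr => j _; ring | ring].
    rewrite e.
    have : mu = qf A u0 - lam by rewrite /mu /g nu0 mulr1.
    move: h; rewrite /g; nra.
  have r0 : r = 0 by apply: nrm_eq0; rewrite /nrm -[RHS](key r); apply: eq_bigr => i _; rewrite expr2.
  have : eigenvalue A (lam + mu).
    apply/eigenvalueP; exists u0.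
      apply/rowP => j; rewrite !mxE.
      have := congr1 (fun m : 'rV[R]_n.+1 => m ord0 j) r0; rewrite !mxE => /eqP; rewrite subr_eq0 => /eqP <-.
      by apply: eq_bigr => i _; rewrite As mulrC.
    apply/eqP => u00; move: nu0; rewrite u00 /nrm big1 => [/eqP|i _].
      by rewrite eq_sym oner_eq0.
    by rewrite mxE expr0n.
  move/lmin; lra.
have := hom u; rewrite /g.
have := mulr_ge0 mu0 (@nrm_ge0 n.+1 u); lra.
Qed.
End Ray.

Lemma zS1 (i : nat) : (i%:Z + 1 = (i.+1)%:Z)%R.
Proof. lia. Qed.
Lemma zP1 (i : nat) : ((i.+1)%:Z - 1 = i%:Z)%R.
Proof. lia. Qed.

Section Energy.
Context {R : realType}.

Lemma abel_gen (n : nat) (w G : int -> R) :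
  \sum_(i < n) w (i.+1)%:Z * fdiff G (i.+1)%:Z =
  w n%:Z * G (n.+1)%:Z - w 0 * G 1 - \sum_(i < n) G (i.+1)%:Z * (w (i.+1)%:Z - w i%:Z).
Proof.
elim: n => [|n IH]; first by rewrite !big_ord0; ring.
rewrite !big_ord_recr /= IH /fdiff zS1; ring.
Qed.

Lemma abel (n : nat) (w G : int -> R) : w 0 = 0 -> w (n.+1)%:Z = 0 ->
  \sum_(i < n) w (i.+1)%:Z * fdiff G (i.+1)%:Z =
  - \sum_(i < n.+1) G (i.+1)%:Z * (w (i.+1)%:Z - w i%:Z).
Proof.
move=> w0 wn; rewrite abel_gen big_ord_recr /= w0 wn; ring.
Qed.

Variables (N : nat) (p q : int -> R).

Definition D1 (y : int -> R) (j : int) := fdiff y (j - 1).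
Definition D2 (y : int -> R) (j : int) := fdiff (fdiff y) (j - 2).
Definition Eop (y : int -> R) (k : int) :=
  fdiff (fdiff (fun j => p j * fdiff (fdiff y) (j - 2))) k
  + fdiff (fun j => q j * fdiff y (j - 1)) k.
Definition Bf (y z : int -> R) :=
  \sum_(i < N.+2) p (i.+1)%:Z * D2 y (i.+1)%:Z * D2 z (i.+1)%:Z
  - \sum_(i < N.+1) q (i.+1)%:Z * D1 y (i.+1)%:Z * D1 z (i.+1)%:Z.
Definition bnd (z : int -> R) :=
  z (-1) = 0 /\ z 0 = 0 /\ z (N.+1)%:Z = 0 /\ z (N.+2)%:Z = 0.

Lemma D1E (z : int -> R) (i : nat) : D1 z (i.+1)%:Z = z (i.+1)%:Z - z i%:Z.
Proof. by rewrite /D1 /fdiff zP1 zS1. Qed.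

Lemma D2E (z : int -> R) (i : nat) :
  D2 z (i.+1)%:Z = (z (i.+1)%:Z - z i%:Z) - (z i%:Z - z (i%:Z - 1)).
Proof.
rewrite /D2 /fdiff.
have -> : (i.+1)%:Z - 2 + 1 + 1 = (i.+1)%:Z by lia.
have -> : (i.+1)%:Z - 2 + 1 = i%:Z by lia.
have -> : (i.+1)%:Z - 2 = i%:Z - 1 by lia.
by [].
Qed.

Lemma energy (y z : int -> R) : bnd z ->
  \sum_(i < N) z (i.+1)%:Z * Eop y (i.+1)%:Z = Bf y z.
Proof.
move=> [zm1 [z0 [zN1 zN2]]].
rewrite /Eop /Bf.
under eq_bigr do rewrite mulrDr.
rewrite big_split /=.
rewrite (abel _ z _ z0 zN1) (abel _ z _ z0 zN1).
set G := (fun j => p j * fdiff (fdiff y) (j - 2)).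
pose w' (j : int) := z j - z (j - 1).
have -> : \sum_(i < N.+1) fdiff G (i.+1)%:Z * (z (i.+1)%:Z - z i%:Z)
        = \sum_(i < N.+1) w' (i.+1)%:Z * fdiff G (i.+1)%:Z.
  by apply: eq_bigr => i _; rewrite /w' zP1 mulrC.
rewrite (abel N.+1 w' G); last 2 first.
- by rewrite /w' sub0r z0 zm1 subrr.
- by rewrite /w' zP1 zN2 zN1 subrr.
rewrite opprK; congr (_ - _).
  apply: eq_bigr => i _; have := D2E y i; have := D2E z i; rewrite /D2 /G /w' zP1 => -> ->; ring.
apply: eq_bigr => i _; rewrite !D1E /D1 /fdiff zP1 zS1; ring.
Qed.

End Energy.

Section LB.
Context {R : realType}.

Lemma sum_ind (n d k : nat) (g : nat -> R) :
  \sum_(i < n) (k == (i + d)%N)%:R * g i = if (d <= k < n + d)%N then g (k - d)%N else 0.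
Proof.
case: ifP => h.
  have hk : (k - d < n)%N by lia.
  rewrite (bigD1 (Ordinal hk)) //= big1 ?addr0.
    have -> : (k == k - d + d)%N by apply/eqP; lia.
    by rewrite mul1r.
  move=> i /eqP ni; have -> : (k == i + d)%N = false.
    apply/negbTE/eqP => e; apply: ni; apply: val_inj => /=; lia.
  by rewrite mul0r.
rewrite big1 // => i _.
have -> : (k == i + d)%N = false by apply/negbTE/eqP => e; have := ltn_ord i; move/negbT: h; rewrite e; lia.
by rewrite mul0r.
Qed.

Lemma sum_ind0 (n k : nat) (g : nat -> R) :
  \sum_(i < n) (k == i :> nat)%:R * g i = if (0 <= k < n + 0)%N then g (k - 0)%N else 0.
Proof. by rewrite -sum_ind; apply: eq_bigr => i _; rewrite addn0. Qed.

Lemma sum_ind1 (n k : nat) (g : nat -> R) :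
  \sum_(i < n) (k == i.+1 :> nat)%:R * g i = if (1 <= k < n + 1)%N then g (k - 1)%N else 0.
Proof. by rewrite -sum_ind; apply: eq_bigr => i _; rewrite addn1. Qed.

Lemma sum_ind2 (n k : nat) (g : nat -> R) :
  \sum_(i < n) (k == i.+2 :> nat)%:R * g i = if (2 <= k < n + 2)%N then g (k - 2)%N else 0.
Proof. by rewrite -sum_ind; apply: eq_bigr => i _; rewrite addn2. Qed.

Lemma qf_MtM m n (M : 'M[R]_(m, n)) (u : 'rV[R]_n) :
  qf (M^T *m M) u = \sum_k (\sum_i M k i * u ord0 i) ^+ 2.
Proof.
rewrite /qf.
transitivity (\sum_i \sum_j \sum_k u ord0 i * M k i * (M k j * u ord0 j)).
  apply: eq_bigr => i _; apply: eq_bigr => j _.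
  rewrite !mxE mulr_sumr mulr_suml; apply: eq_bigr => k _; rewrite !mxE; ring.
rewrite exchange_big /=.
transitivity (\sum_j \sum_k \sum_i u ord0 i * M k i * (M k j * u ord0 j)).
  by apply: eq_bigr => j _; rewrite exchange_big.
rewrite exchange_big /=; apply: eq_bigr => k _.
rewrite expr2 mulr_suml exchange_big /=; apply: eq_bigr => i _.
rewrite mulr_sumr; apply: eq_bigr => j _; ring.
Qed.

Lemma Wrow (N : nat) (z : int -> R) : bnd N z -> forall k : 'I_N.+2,
  \sum_i Wmx R N k i * (\row_(i < N) z (i.+1)%:Z) ord0 i = D2 z (k.+1)%:Z.
Proof.
move=> [zm1 [z0 [zN1 zN2]]] k.
have z0' : z (Posz 0) = 0 := z0.
have hk := ltn_ord k.
under eq_bigr do rewrite !mxE mulrDl mulrBl -mulrA.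
rewrite big_split sumrB /= -mulr_sumr.
rewrite (sum_ind0 N k (fun i => z (i.+1)%:Z)) (sum_ind1 N k (fun i => z (i.+1)%:Z))
  (sum_ind2 N k (fun i => z (i.+1)%:Z)) D2E.
have -> : (if (0 <= k < N + 0)%N then z ((k - 0).+1)%:Z else 0) = z (k.+1)%:Z.
  case: ifP => h; first by rewrite subn0.
  have : (k = N :> nat \/ k = N.+1 :> nat) by move/negbT: h; lia.
  by case => ->; [rewrite zN1 | rewrite zN2].
have -> : (if (1 <= k < N + 1)%N then z ((k - 1).+1)%:Z else 0) = z k%:Z.
  case: ifP => h; first by have -> : (k - 1).+1 = k by lia.
  have : (k = 0 :> nat \/ k = N.+1 :> nat) by move/negbT: h; lia.
  by case => ->; [rewrite z0' | rewrite zN1].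
have -> : (if (2 <= k < N + 2)%N then z ((k - 2).+1)%:Z else 0) = z (k%:Z - 1).
  case: ifP => h; first by congr (z _); lia.
  have : (k = 0 :> nat \/ k = 1 :> nat) by move/negbT: h; lia.
  by case => ->; [rewrite sub0r zm1 | rewrite subrr z0].
ring.
Qed.

Lemma Vrow (N : nat) (z : int -> R) : bnd N z -> forall k : 'I_N.+1,
  \sum_i Vmx R N k i * (\row_(i < N) z (i.+1)%:Z) ord0 i = D1 z (k.+1)%:Z.
Proof.
move=> [zm1 [z0 [zN1 zN2]]] k.
have z0' : z (Posz 0) = 0 := z0.
have hk := ltn_ord k.
under eq_bigr do rewrite !mxE mulrBl.
rewrite sumrB /=.
rewrite (sum_ind0 N k (fun i => z (i.+1)%:Z)) (sum_ind1 N k (fun i => z (i.+1)%:Z)) D1E.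
have -> : (if (0 <= k < N + 0)%N then z ((k - 0).+1)%:Z else 0) = z (k.+1)%:Z.
  case: ifP => h; first by rewrite subn0.
  have : (k = N :> nat) by move/negbT: h; lia.
  by move=> ->; rewrite zN1.
have -> : (if (1 <= k < N + 1)%N then z ((k - 1).+1)%:Z else 0) = z k%:Z.
  case: ifP => h; first by have -> : (k - 1).+1 = k by lia.
  have : (k = 0 :> nat) by move/negbT: h; lia.
  by move=> ->; rewrite z0'.
by [].
Qed.

Definition zrow (N : nat) (z : int -> R) : 'rV[R]_N := \row_(i < N) z (i.+1)%:Z.

Lemma nrm_zrow (N : nat) (z : int -> R) : nrm (zrow N z) = \sum_(i < N) z (i.+1)%:Z ^+ 2.
Proof. by apply: eq_bigr => i _; rewrite mxE. Qed.

Lemma qfW (N : nat) (z : int -> R) : bnd N z ->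
  qf ((Wmx R N)^T *m Wmx R N) (zrow N z) = \sum_(k < N.+2) D2 z (k.+1)%:Z ^+ 2.
Proof. by move=> bz; rewrite qf_MtM; apply: eq_bigr => k _; rewrite Wrow. Qed.

Lemma qfV (N : nat) (z : int -> R) : bnd N z ->
  qf ((Vmx R N)^T *m Vmx R N) (zrow N z) = \sum_(k < N.+1) D1 z (k.+1)%:Z ^+ 2.
Proof. by move=> bz; rewrite qf_MtM; apply: eq_bigr => k _; rewrite Vrow. Qed.

Lemma D2_le16 (N : nat) (z : int -> R) : bnd N z ->
  \sum_(k < N.+2) D2 z (k.+1)%:Z ^+ 2 <= 16 * \sum_(i < N) z (i.+1)%:Z ^+ 2.
Proof.
move=> [zm1 [z0 [zN1 zN2]]].
have z0' : z (Posz 0) = 0 := z0.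
set S := \sum_(i < N) z (i.+1)%:Z ^+ 2.
have ha : \sum_(k < N.+2) z (k.+1)%:Z ^+ 2 = S.
  rewrite /S !big_ord_recr /= zN1 zN2. ring.
have hb : \sum_(k < N.+2) z k%:Z ^+ 2 = S.
  rewrite /S big_ord_recl big_ord_recr /= z0' zN1. ring.
have hc : \sum_(k < N.+2) z (k%:Z - 1) ^+ 2 = S.
  rewrite big_ord_recl big_ord_recl /=.
  have -> : Posz 0 - 1 = -1 by [].
  have -> : Posz 1 - 1 = 0 by [].
  rewrite zm1 z0 /S; rewrite expr0n /= !add0r; apply: eq_bigr => i _.
  by have -> : (bump 0 (bump 0 i))%:Z - 1 = (i.+1)%:Z by rewrite /bump /=; lia.
apply: (@le_trans _ _ (\sum_(k < N.+2) 4 * (z (k.+1)%:Z ^+ 2 + 2 * z k%:Z ^+ 2 + z (k%:Z - 1) ^+ 2))).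
  apply: ler_sum => k _; rewrite D2E.
  set a := z (k.+1)%:Z; set b := z k%:Z; set c := z (k%:Z - 1).
  have := sqr_ge0 (a + 2 * b + c); have := sqr_ge0 (a - c); nra.
rewrite -mulr_sumr !big_split /= -mulr_sumr ha hb hc; lra.
Qed.

Lemma D1_le4 (N : nat) (z : int -> R) : bnd N z ->
  \sum_(k < N.+1) D1 z (k.+1)%:Z ^+ 2 <= 4 * \sum_(i < N) z (i.+1)%:Z ^+ 2.
Proof.
move=> [zm1 [z0 [zN1 zN2]]].
have z0' : z (Posz 0) = 0 := z0.
set S := \sum_(i < N) z (i.+1)%:Z ^+ 2.
have ha : \sum_(k < N.+1) z (k.+1)%:Z ^+ 2 = S.
  by rewrite /S !big_ord_recr /= zN1; ring.
have hb : \sum_(k < N.+1) z k%:Z ^+ 2 = S.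
  by rewrite /S big_ord_recl /= z0'; ring.
apply: (@le_trans _ _ (\sum_(k < N.+1) 2 * (z (k.+1)%:Z ^+ 2 + z k%:Z ^+ 2))).
  apply: ler_sum => k _; rewrite D1E.
  set a := z (k.+1)%:Z; set b := z k%:Z.
  have := sqr_ge0 (a + b); nra.
rewrite -mulr_sumr !big_split /= ha hb; lra.
Qed.

Lemma MtM_sym m n (M : 'M[R]_(m, n)) i j : (M^T *m M) i j = (M^T *m M) j i.
Proof. rewrite !mxE; apply: eq_bigr => k _; rewrite !mxE mulrC. done. Qed.

Lemma pmin_le (N : nat) (p : int -> R) (i : 'I_N.+2) : pmin N p <= p (i.+1)%:Z.
Proof. exact: (bigmin_le _ i (fun i : 'I_N.+2 => p (i.+1)%:Z)). Qed.

Lemma qmax_ge (N : nat) (q : int -> R) (i : 'I_N.+1) : q (i.+1)%:Z <= qmax N q.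
Proof. exact: (le_bigmax _ (fun i : 'I_N.+1 => q (i.+1)%:Z) i). Qed.

Lemma Bf_lb (N : nat) (p q : int -> R) (lam1 lam2 : R) (z : int -> R) :
  smallest_eigenvalue ((Vmx R N)^T *m Vmx R N) lam1 ->
  smallest_eigenvalue ((Wmx R N)^T *m Wmx R N) lam2 ->
  bnd N z ->
  (etap N lam2 p * pmin N p - etaq N lam1 q * qmax N q) * \sum_(i < N) z (i.+1)%:Z ^+ 2
  <= Bf N p q z z.
Proof.
move=> e1 e2 bz.
set S := \sum_(i < N) z (i.+1)%:Z ^+ 2.
set Sp := \sum_(k < N.+2) D2 z (k.+1)%:Z ^+ 2.
set Sq := \sum_(k < N.+1) D1 z (k.+1)%:Z ^+ 2.
have S0 : 0 <= S by apply: sumr_ge0 => i _; exact: sqr_ge0.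
have h1 : pmin N p * Sp <= \sum_(i < N.+2) p (i.+1)%:Z * D2 z (i.+1)%:Z * D2 z (i.+1)%:Z.
  rewrite /Sp mulr_sumr; apply: ler_sum => i _.
  have := pmin_le N p i; have := sqr_ge0 (D2 z (i.+1)%:Z); nra.
have h2 : \sum_(i < N.+1) q (i.+1)%:Z * D1 z (i.+1)%:Z * D1 z (i.+1)%:Z <= qmax N q * Sq.
  rewrite /Sq mulr_sumr; apply: ler_sum => i _.
  have := qmax_ge N q i; have := sqr_ge0 (D1 z (i.+1)%:Z); nra.
have h3 : etap N lam2 p * pmin N p * S <= pmin N p * Sp.
  rewrite /etap; case: ifP => hp.
    have := rayleigh _ _ _ (@MtM_sym _ _ (Wmx R N)) e2 (zrow N z).
    rewrite qfW // nrm_zrow -/S -/Sp => h; nra.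
  have := D2_le16 N z bz; rewrite -/S -/Sp => h.
  move/negbT: hp; rewrite -ltNge => hp; nra.
have h4 : qmax N q * Sq <= etaq N lam1 q * qmax N q * S.
  rewrite /etaq; case: ifP => hq.
    have := rayleigh _ _ _ (@MtM_sym _ _ (Vmx R N)) e1 (zrow N z).
    rewrite qfV // nrm_zrow -/S -/Sq => h; nra.
  have := D1_le4 N z bz; rewrite -/S -/Sq => h.
  move/negbT: hq; rewrite -leNgt => hq; nra.
rewrite /Bf; lra.
Qed.

End LB.

Section Prim.
Context {R : realType}.

Definition Fprim (K : R) (g : R -> R) (x : R) : R :=
  (\int[@lebesgue_measure R]_(t in `[-K, x]) g t)%R.

Lemma Fprim_der (K : R) (g : R -> R) (x : R) : continuous g -> -K < x ->
  derivable (Fprim K g) x 1 /\ ((Fprim K g)^`()%classic x = g x).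
Proof.
move=> gc xK.
have xu : x < x + 1 by rewrite ltrDl.
apply: (@continuous_FTC1_closed R g (-K) x (x + 1) xu) => //.
apply: continuous_compact_integrable; first exact: segment_compact.
exact: continuous_subspaceT.
exact: gc.
Qed.

Lemma Fprim_cont (K : R) (g : R -> R) (x : R) : continuous g -> -K < x ->
  {for x, continuous (Fprim K g)}.
Proof.
move=> gc xK; have [d _] := Fprim_der _ _ _ gc xK.
by apply: differentiable_continuous; apply/derivable1_diffP.
Qed.

Lemma Fprim_bnd (K : R) (g : R -> R) (s t : R) : continuous g ->
  (forall a b, a <= b -> g a <= g b) -> -K < s -> -K < t ->
  g s * (t - s) <= Fprim K g t - Fprim K g s <= g t * (t - s).
Proof.
move=> gc gm.
wlog st : s t / s <= t.
  move=> H sK tK; have [st|ts] := leP s t; first exact: H.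
  have := H t s (ltW ts) tK sK; move=> /andP[h1 h2].
  apply/andP; split; lra.
move=> sK tK.
move: st; rewrite le_eqVlt => /orP[/eqP <-|st]; first by rewrite !subrr !mulr0 lexx.
have dF : forall x, x \in `]s, t[ -> is_derive x 1 (Fprim K g) (g x).
  move=> x; rewrite in_itv /= => /andP[sx xt].
  have [d e] := Fprim_der _ _ _ gc (lt_trans sK sx).
  by rewrite -e derive1E; apply: derivableP.
have cF : {within `[s, t], continuous (Fprim K g)}.
  apply: derivable_within_continuous => x; rewrite in_itv /= => /andP[sx xt].
  by have [d _] := Fprim_der _ _ _ gc (lt_le_trans sK sx).
have [c /[!in_itv] /= /andP[sc ct] ->] := MVT st dF cF.
have := gm _ _ (ltW sc); have := gm _ _ (ltW ct).
have : 0 < t - s by rewrite subr_gt0.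
move=> h1 h2 h3; apply/andP; split; nra.
Qed.

End Prim.

Section Ext.
Context {R : realType}.

Definition ext {N : nat} (u : 'rV[R]_N) (k : int) : R :=
  \sum_(i < N) (k == (i.+1)%:Z)%:R * u ord0 i.

Lemma ext_val N (u : 'rV[R]_N) (i : 'I_N) : ext u (i.+1)%:Z = u ord0 i.
Proof.
rewrite /ext (bigD1 i) //= eqxx mul1r big1 ?addr0 // => j /eqP ji.
have -> : ((i.+1)%:Z == (j.+1)%:Z) = false.
  apply/negbTE/eqP => e; apply: ji; apply: val_inj => /=; lia.
by rewrite mul0r.
Qed.

Lemma ext_out N (u : 'rV[R]_N) (k : int) : ~~ ((1 <= k) && (k <= N%:Z)) -> ext u k = 0.
Proof.
move=> h; rewrite /ext big1 // => i _.
have -> : (k == (i.+1)%:Z) = false.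
  apply/negbTE/eqP => e; have := ltn_ord i; move: h; rewrite e; lia.
by rewrite mul0r.
Qed.

Lemma ext_bnd N (u : 'rV[R]_N) : bnd N (ext u).
Proof.
split; first by rewrite ext_out.
split; first by rewrite ext_out.
split; first by rewrite ext_out //; lia.
by rewrite ext_out //; lia.
Qed.

Lemma ext_add N (u w : 'rV[R]_N) (t : R) k : ext (u + t *: w) k = ext u k + t * ext w k.
Proof.
rewrite /ext mulr_sumr -big_split /=; apply: eq_bigr => i _; rewrite !mxE; ring.
Qed.

Lemma ext_scale N (w : 'rV[R]_N) (t : R) k : ext (t *: w) k = t * ext w k.
Proof.
rewrite /ext mulr_sumr; apply: eq_bigr => i _; rewrite !mxE; ring.
Qed.

Lemma ext0 N k : ext (0 : 'rV[R]_N) k = 0.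
Proof. by rewrite /ext big1 // => i _; rewrite mxE mulr0. Qed.

Lemma ext_cont N k : continuous (fun u : 'rV[R]_N => ext u k).
Proof.
apply: (@continuous_big _ _ +%R 0 predT add_continuous) => i _.
move=> x; exact: (continuousM (@cst_continuous _ _ _ x) (@coord_continuous R 1 N ord0 i x)).
Qed.

Lemma contB N (F G : 'rV[R]_N -> R) : continuous F -> continuous G ->
  continuous (fun u => F u - G u).
Proof. by move=> hf hg x; apply: continuousB; [exact: hf | exact: hg]. Qed.

Lemma contM N (F G : 'rV[R]_N -> R) : continuous F -> continuous G ->
  continuous (fun u => F u * G u).
Proof. by move=> hf hg x; apply: continuousM; [exact: hf | exact: hg]. Qed.

Lemma D2_cont N j : continuous (fun u : 'rV[R]_N => D2 (ext u) j).
Proof.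
rewrite /D2 /fdiff /=.
apply: contB; apply: contB; exact: ext_cont.
Qed.

Lemma D1_cont N j : continuous (fun u : 'rV[R]_N => D1 (ext u) j).
Proof.
rewrite /D1 /fdiff /=.
apply: contB; exact: ext_cont.
Qed.

Lemma Bf_cont N (p q : int -> R) : continuous (fun u : 'rV[R]_N => Bf N p q (ext u) (ext u)).
Proof.
rewrite /Bf; apply: contB.
  apply: (@continuous_big _ _ +%R 0 predT add_continuous) => i _.
  apply: contM; last exact: D2_cont.
  apply: contM; [exact: cst_continuous | exact: D2_cont].
apply: (@continuous_big _ _ +%R 0 predT add_continuous) => i _.
apply: contM; last exact: D1_cont.
apply: contM; [exact: cst_continuous | exact: D1_cont].
Qed.

Lemma sum_quad n (t : R) (F G H L : 'I_n -> R) :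
  (forall i, F i = G i + 2 * t * H i + t ^+ 2 * L i) ->
  \sum_i F i = \sum_i G i + 2 * t * \sum_i H i + t ^+ 2 * \sum_i L i.
Proof.
move=> e; rewrite !mulr_sumr -!big_split /=; apply: eq_bigr => i _; exact: e.
Qed.

Lemma Bf_quad N (p q y z : int -> R) (t : R) :
  Bf N p q (fun k => y k + t * z k) (fun k => y k + t * z k)
  = Bf N p q y y + 2 * t * Bf N p q y z + t ^+ 2 * Bf N p q z z.
Proof.
rewrite /Bf.
rewrite (@sum_quad _ t _ (fun i : 'I_N.+2 => p (i.+1)%:Z * D2 y (i.+1)%:Z * D2 y (i.+1)%:Z)
   (fun i : 'I_N.+2 => p (i.+1)%:Z * D2 y (i.+1)%:Z * D2 z (i.+1)%:Z)
   (fun i : 'I_N.+2 => p (i.+1)%:Z * D2 z (i.+1)%:Z * D2 z (i.+1)%:Z)).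
  rewrite (@sum_quad _ t _ (fun i : 'I_N.+1 => q (i.+1)%:Z * D1 y (i.+1)%:Z * D1 y (i.+1)%:Z)
   (fun i : 'I_N.+1 => q (i.+1)%:Z * D1 y (i.+1)%:Z * D1 z (i.+1)%:Z)
   (fun i : 'I_N.+1 => q (i.+1)%:Z * D1 z (i.+1)%:Z * D1 z (i.+1)%:Z)).
    ring.
  move=> i; rewrite /D1 /fdiff; ring.
move=> i; rewrite /D2 /fdiff; ring.
Qed.

Lemma Bf_scal2 N (p q y z : int -> R) (a : R) :
  Bf N p q y (fun k => a * z k) = a * Bf N p q y z.
Proof.
rewrite /Bf mulrBr !mulr_sumr; congr (_ - _); apply: eq_bigr => i _;
  rewrite /D1 /D2 /fdiff; ring.
Qed.

Lemma Bf_sym N (p q y z : int -> R) : Bf N p q y z = Bf N p q z y.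
Proof. by rewrite /Bf; congr (_ - _); apply: eq_bigr => i _; ring. Qed.

Lemma coord_le N (v : 'rV[R]_N) (i : 'I_N) : `|v ord0 i| <= `|v|.
Proof.
rewrite [X in _ <= X]/Num.norm /= mx_normrE.
exact: (le_bigmax _ (fun ij : 'I_1 * 'I_N => `|v ij.1 ij.2|) (ord0, i)).
Qed.

End Ext.

Section Main.
Context {R : realType}.

Lemma int_range (N : nat) (k : int) : 1 <= k <= N%:Z -> exists i : 'I_N, k = (i.+1)%:Z.
Proof.
case: k => n h; last by lia.
have hn : (n.-1 < N)%N by lia.
exists (Ordinal hn) => /=; congr Posz; lia.
Qed.

Lemma mono_prod (g : R -> R) (a b : R) : (forall s t, s <= t -> g s <= g t) ->
  0 <= (a - b) * (g a - g b).
Proof.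
move=> gm; have [ab|ba] := leP a b.
  have := gm _ _ ab; nra.
have := gm _ _ (ltW ba); nra.
Qed.

Lemma Eop_sub (p q y z : int -> R) k :
  Eop p q (fun j => y j - z j) k = Eop p q y k - Eop p q z k.
Proof. rewrite /Eop /fdiff; ring. Qed.

Lemma uniqueness (N : nat) (f : int -> R -> R) (p q : int -> R) (lam1 lam2 : R) (y z : int -> R) :
  smallest_eigenvalue ((Vmx R N)^T *m Vmx R N) lam1 ->
  smallest_eigenvalue ((Wmx R N)^T *m Wmx R N) lam2 ->
  etap N lam2 p * pmin N p - etaq N lam1 q * qmax N q > 0 ->
  (forall k : int, 1 <= k <= N%:Z -> forall s t : R, s <= t -> f k s <= f k t) ->
  is_solution N p q f y -> is_solution N p q f z ->
  forall k : int, -1 <= k <= (N.+2)%:Z -> z k = y k.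
Proof.
move=> e1 e2 cpos fm [hy [y1 [y2 [y3 y4]]]] [hz [z1 [z2 [z3 z4]]]].
set c := etap N lam2 p * pmin N p - etaq N lam1 q * qmax N q in cpos.
pose d := fun j => y j - z j.
have bd : bnd N d by rewrite /bnd /d y1 y2 y3 y4 z1 z2 z3 z4 subrr.
have hlb := Bf_lb N p q lam1 lam2 d e1 e2 bd.
rewrite -(energy N p q d d bd) in hlb.
have hle : \sum_(i < N) d (i.+1)%:Z * Eop p q d (i.+1)%:Z <= 0.
  apply: sumr_le0 => i _.
  have hk : 1 <= (i.+1)%:Z <= N%:Z by have := ltn_ord i; lia.
  have ey : Eop p q y (i.+1)%:Z + f (i.+1)%:Z (y (i.+1)%:Z) = 0 := hy _ hk.
  have ez : Eop p q z (i.+1)%:Z + f (i.+1)%:Z (z (i.+1)%:Z) = 0 := hz _ hk.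
  rewrite Eop_sub /d.
  have := mono_prod (f (i.+1)%:Z) (y (i.+1)%:Z) (z (i.+1)%:Z) (fm _ hk).
  have -> : Eop p q y (i.+1)%:Z = - f (i.+1)%:Z (y (i.+1)%:Z) by lra.
  have -> : Eop p q z (i.+1)%:Z = - f (i.+1)%:Z (z (i.+1)%:Z) by lra.
  nra.
set S := \sum_(i < N) d (i.+1)%:Z ^+ 2 in hlb.
have S0 : 0 <= S by apply: sumr_ge0 => i _; exact: sqr_ge0.
have cS : c * S <= 0 by rewrite /c; lra.
have SS : S = 0.
  by apply/eqP; rewrite eq_le S0 andbT -(pmulr_rle0 S cpos).
have di : forall i : 'I_N, d (i.+1)%:Z = 0.
  move=> i; have := @psumr_eq0P _ _ predT (fun i : 'I_N => d (i.+1)%:Z ^+ 2)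
     (fun i _ => sqr_ge0 _) SS i isT.
  by move/eqP; rewrite sqrf_eq0 => /eqP.
move=> k hk.
have [kin|kout] := boolP ((1 <= k) && (k <= N%:Z)).
  have [i ->] := int_range N k kin; have := di i; rewrite /d; lra.
have : k = -1 \/ k = 0 \/ k = (N.+1)%:Z \/ k = (N.+2)%:Z by move: kout hk; lia.
by case=> [->|[->|[->|->]]]; rewrite ?y1 ?z1 ?y2 ?z2 ?y3 ?z3 ?y4 ?z4.
Qed.

Lemma contRD (F G : R -> R) : continuous F -> continuous G -> continuous (fun t => F t + G t).
Proof. by move=> hf hg x; apply: continuousD; [exact: hf | exact: hg]. Qed.

Lemma contRM (F G : R -> R) : continuous F -> continuous G -> continuous (fun t => F t * G t).
Proof. by move=> hf hg x; apply: continuousM; [exact: hf | exact: hg]. Qed.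

Lemma contRid : continuous (fun t : R => t).
Proof. by move=> x; exact: cvg_id. Qed.

Lemma contDat N (F G : 'rV[R]_N -> R) x : {for x, continuous F} -> {for x, continuous G} ->
  {for x, continuous (fun u => F u + G u)}.
Proof. by move=> hf hg; apply: continuousD. Qed.

Lemma contMat N (F G : 'rV[R]_N -> R) x : {for x, continuous F} -> {for x, continuous G} ->
  {for x, continuous (fun u => F u * G u)}.
Proof. by move=> hf hg; apply: continuousM. Qed.

Lemma existence (N : nat) (f : int -> R -> R) (p q : int -> R) (lam1 lam2 : R) :
  smallest_eigenvalue ((Vmx R N)^T *m Vmx R N) lam1 ->
  smallest_eigenvalue ((Wmx R N)^T *m Wmx R N) lam2 ->
  (forall k : int, 1 <= k <= N%:Z -> continuous (f k)) ->
  etap N lam2 p * pmin N p - etaq N lam1 q * qmax N q > 0 ->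
  (forall k : int, 1 <= k <= N%:Z -> forall s t : R, s <= t -> f k s <= f k t) ->
  exists y : int -> R, is_solution N p q f y.
Proof.
move=> e1 e2 fc cpos fm.
set c := etap N lam2 p * pmin N p - etaq N lam1 q * qmax N q in cpos.
have hkI : forall i : 'I_N, 1 <= (i.+1)%:Z <= N%:Z by move=> i; have := ltn_ord i; lia.
pose g (i : 'I_N) := f (i.+1)%:Z.
have gc : forall i, continuous (g i) by move=> i; exact: fc.
have gm : forall i a b, a <= b -> g i a <= g i b by move=> i a b; exact: fm.
pose C0 := \sum_i `|g i 0|.
have C00 : 0 <= C0 by apply: sumr_ge0 => i _.
pose rho := 2 * C0 / c + 1.
have rho1 : 1 <= rho by rewrite /rho lerDr; apply: divr_ge0; [lra | exact: ltW].
pose K := rho + 1.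
pose F i x := Fprim K (g i) x.
pose J (v : 'rV[R]_N) := Bf N p q (ext v) (ext v) / 2 + \sum_i F i (v ord0 i).
pose B := [set v : 'rV[R]_N | `|v| <= rho].
have inK : forall v : 'rV[R]_N, B v -> forall i, - K < v ord0 i.
  move=> v Bv i; have := coord_le _ v i; rewrite /B /= in Bv.
  move=> h; have : `|v ord0 i| <= rho by lra.
  rewrite ler_norml => /andP [h1 _]; rewrite /K; lra.
have B0 : B !=set0 by exists 0; rewrite /B /= normr0; lra.
have Bc : compact B.
  apply: bounded_closed_compact.
    rewrite /bounded_near; exists rho; split; first exact: num_real.
    by move=> M M1 v; rewrite /B /= => Bv; lra.
  have h := @preimage_closed _ _ (fun v : 'rV[R]_N => `|v|) [set x | x <= rho] (fun x _ => @norm_continuous _ _ x) (@closed_le _ rho).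
  exact: h.
have Jc : {within B, continuous J}.
  apply: continuous_in_subspaceT => v; rewrite inE => Bv.
  rewrite /J; apply: contDat.
    apply: contMat; [exact: Bf_cont | exact: cst_continuous].
  apply: (@cvg_big _ _ +%R 0 predT add_continuous) => [|i _]; first exact: nbhs_filter.
  apply: (@continuous_comp _ _ _ (fun x : 'rV[R]_N => x ord0 i) (F i)).
    exact: coord_continuous.
  exact: Fprim_cont (gc i) (inK v Bv i).
have [u uB umin] := EVT_min_rV B0 Bc Jc.
have uB' : B u by rewrite inE in uB.
have J0 : J 0 = \sum_i F i 0.
  rewrite /J; have -> : ext (0 : 'rV[R]_N) = (fun k => 0 * ext (0 : 'rV[R]_N) k).
    by apply: funext => k; rewrite ext0 mul0r.
  rewrite Bf_scal2 mul0r mul0r add0r; apply: eq_bigr => i _; by rewrite mxE.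
have lowb : forall v, B v -> c / 2 * nrm v - C0 * `|v| <= J v - J 0.
  move=> v Bv.
  have hB := Bf_lb N p q lam1 lam2 (ext v) e1 e2 (ext_bnd _ v).
  have e : \sum_(i < N) ext v (i.+1)%:Z ^+ 2 = nrm v.
    by apply: eq_bigr => i _; rewrite ext_val.
  rewrite e in hB.
  have hF : - C0 * `|v| <= \sum_i (F i (v ord0 i) - F i 0).
    rewrite /C0 mulNr mulr_suml -sumrN; apply: ler_sum => i _.
    have K0 : - K < 0 by rewrite /K; lra.
    have := Fprim_bnd K (g i) 0 (v ord0 i) (gc i) (gm i) K0 (inK v Bv i).
    rewrite subr0 => /andP [h _].
    have h1 := ler_norm (- (g i 0 * v ord0 i)); rewrite normrN normrM in h1.
    have h2 := coord_le _ v i.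
    have h3 := normr_ge0 (g i 0).
    rewrite /F; nra.
  have hB' : c * nrm v <= Bf N p q (ext v) (ext v) := hB.
  rewrite sumrB in hF; rewrite J0 /J; lra.
have Ju0 : J u <= J 0 by apply: umin; rewrite inE /B /= normr0; lra.
have crho : c * rho = 2 * C0 + c by rewrite /rho; field; rewrite gt_eqF.
have uint : `|u| < rho.
  rewrite lt_neqAle uB' andbT; apply/eqP => ur.
  have nz : mx_norm u != 0.
    have -> : mx_norm u = `|u| by [].
    by rewrite ur; apply/eqP; lra.
  have [[i0 i] /= hi] := mx_norm_neq0 nz.
  have hi' : `|u ord0 i| = rho.
    rewrite -ur; have -> : `|u| = mx_norm u by [].
    by rewrite hi (ord1 i0).
  have hn : rho ^+ 2 <= nrm u.
    rewrite /nrm (bigD1 i) //= -hi' real_normK ?num_real //.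
    rewrite lerDl; apply: sumr_ge0 => k _; exact: sqr_ge0.
  have := lowb u uB'; rewrite ur => hl.
  have : c / 2 * rho ^+ 2 - C0 * rho <= 0 by nra.
  have -> : c / 2 * rho ^+ 2 - C0 * rho = rho * (c * rho - 2 * C0) / 2 by field.
  rewrite crho; have : 0 < rho * (2 * C0 + c - 2 * C0) / 2.
    apply: divr_gt0 => //; apply: mulr_gt0; lra.
  lra.
set y := ext u.
have EL : forall w : 'rV[R]_N, 0 <= Bf N p q y (ext w) + \sum_i g i (u ord0 i) * w ord0 i.
  move=> w.
  set z := ext w.
  pose phi t := Bf N p q y z + t / 2 * Bf N p q z z
                + \sum_i g i (u ord0 i + t * w ord0 i) * w ord0 i.
  have phi0 : phi 0 = Bf N p q y z + \sum_i g i (u ord0 i) * w ord0 i.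
    rewrite /phi mul0r mul0r addr0; congr (_ + _); apply: eq_bigr => i _.
    by rewrite mul0r addr0.
  pose t0 := (rho - `|u|) / (`|w| + 1).
  have w1 : 0 < `|w| + 1 by have := normr_ge0 w; lra.
  have t0p : 0 < t0 by apply: divr_gt0 => //; lra.
  have phipos : forall t, 0 < t -> t < t0 -> 0 <= phi t.
    move=> t tp tt0.
    have inB : B (u + t *: w).
      rewrite /B /=; apply: (le_trans (ler_normD _ _)); rewrite normrZ gtr0_norm //.
      have : t * (`|w| + 1) < rho - `|u| by rewrite -ltr_pdivlMr.
      have := normr_ge0 w; nra.
    have := umin (u + t *: w); rewrite inE => /(_ inB) hJ.
    have eY : ext (u + t *: w) = (fun k => y k + t * z k).
      by apply: funext => k; rewrite ext_add.
    have hF : \sum_i F i ((u + t *: w) ord0 i) - \sum_i F i (u ord0 i)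
              <= t * \sum_i g i (u ord0 i + t * w ord0 i) * w ord0 i.
      rewrite -sumrB mulr_sumr; apply: ler_sum => i _.
      have := Fprim_bnd K (g i) (u ord0 i) ((u + t *: w) ord0 i) (gc i) (gm i)
                (inK u uB' i) (inK _ inB i).
      rewrite !mxE => /andP [_ h]; rewrite /F.
      have e : u ord0 i + t * w ord0 i - u ord0 i = t * w ord0 i by ring.
      rewrite e in h.
      have -> : t * (g i (u ord0 i + t * w ord0 i) * w ord0 i)
              = g i (u ord0 i + t * w ord0 i) * (t * w ord0 i) by ring.
      exact: h.
    move: hJ; rewrite /J eY Bf_quad => hJ.
    have : 0 <= t * phi t.
      rewrite /phi; move: hF hJ; rewrite -/y; nra.
    by rewrite pmulr_rge0.
  have phic : continuous phi.
    apply: contRD; first apply: contRD.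
    - exact: cst_continuous.
    - apply: contRM; last exact: cst_continuous.
      apply: contRM; [exact: contRid | exact: cst_continuous].
    apply: (@continuous_big _ _ +%R 0 predT add_continuous) => i _.
    apply: contRM; last exact: cst_continuous.
    have aff : continuous (fun t : R => u ord0 i + t * w ord0 i).
      apply: contRD; first exact: cst_continuous.
      apply: contRM; [exact: contRid | exact: cst_continuous].
    move=> x; exact: (continuous_comp (aff x) (gc i _)).
  rewrite -phi0 leNgt; apply/negP => hneg.
  have := phic 0; move/cvgrPdist_lt => /(_ (- phi 0)).
  have hp : 0 < - phi 0 by lra.
  move=> /(_ hp) /nbhs_ballP [d d0 Hd].
  pose t := Num.min (d / 2) (t0 / 2).
  have tp : 0 < t by rewrite /t lt_min; apply/andP; split; apply: divr_gt0.
  have td1 : t <= d / 2 by rewrite /t ge_min lexx.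
  have tt1 : t <= t0 / 2 by rewrite /t ge_min lexx orbT.
  have hb : ball (0 : R) d t.
    rewrite /ball /= sub0r normrN gtr0_norm //; lra.
  have := Hd t hb; rewrite /= ltr_norml => /andP [h1 h2].
  have tt0 : t < t0 by lra.
  have := phipos t tp tt0; lra.
have ELeq : forall w : 'rV[R]_N, Bf N p q y (ext w) + \sum_i g i (u ord0 i) * w ord0 i = 0.
  move=> w; have h1 := EL w; have h2 := EL ((-1) *: w).
  have eN : ext ((-1) *: w) = (fun k => -1 * ext w k).
    by apply: funext => k; rewrite ext_scale.
  rewrite eN Bf_scal2 in h2.
  have eS : \sum_i g i (u ord0 i) * ((-1) *: w) ord0 i = - \sum_i g i (u ord0 i) * w ord0 i.
    rewrite -sumrN; apply: eq_bigr => i _; rewrite mxE; ring.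
  rewrite eS in h2; lra.
have sol : forall j : 'I_N, Eop p q y (j.+1)%:Z + g j (u ord0 j) = 0.
  move=> j; pose w : 'rV[R]_N := delta_mx ord0 j.
  have := ELeq w; rewrite -(energy N p q y (ext w) (ext_bnd _ w)).
  under eq_bigr do rewrite ext_val.
  rewrite -big_split /= (bigD1 j) //= big1 ?addr0.
    by rewrite /w !mxE !eqxx /= mul1r mulr1.
  move=> i ij; rewrite /w !mxE eqxx /=.
  have -> : (i == j) = false by apply/negbTE.
  by rewrite mul0r mulr0 addr0.
exists y; split.
  move=> k hk; have [j ->] := int_range N k hk.
  have := sol j; rewrite /g -(ext_val _ u j) => h; exact: h.
exact: ext_bnd.
Qed.

End Main.

Theorem theorem4 (R : realType) (N : nat) (f : int -> R -> R) (p q : int -> R)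
    (lam1 lam2 : R) :
  (0 < N)%N ->
  smallest_eigenvalue ((Vmx R N)^T *m Vmx R N) lam1 ->
  smallest_eigenvalue ((Wmx R N)^T *m Wmx R N) lam2 ->
  (forall k : int, 1 <= k <= N%:Z -> continuous (f k)) ->
  (exists m : R, 0 < m /\
     forall (k : int) (s : R), 1 <= k <= N%:Z -> m <= `|s| -> 0 <= s * f k s) ->
  etap N lam2 p * pmin N p - etaq N lam1 q * qmax N q > 0 ->
  (forall k : int, 1 <= k <= N%:Z -> forall s t : R, s <= t -> f k s <= f k t) ->
  pmin N p * etap N lam2 p > qmax N q * etaq N lam1 q ->
  exists y : int -> R, is_solution N p q f y /\
    forall z : int -> R, is_solution N p q f z ->
      forall k : int, -1 <= k <= (N.+2)%:Z -> z k = y k.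
Proof.
move=> _ e1 e2 fc _ cpos fm _.
have [y hy] := existence N f p q lam1 lam2 e1 e2 fc cpos fm.
exists y; split => // z hz.
exact: (uniqueness N f p q lam1 lam2 y z e1 e2 cpos fm hy hz).
Qed.
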